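(* Let $G=XY$ be $n$-isobicyclic with canonical generators $x,y$, and let $\pi$ be any set of primes dividing $n$. Then $G_\pi=X_\pi Y_\pi$ is a Hall $\pi$-subgroup of $G$, and $(G_\pi,x_\pi,y_\pi)$ is an isobicyclic triple (of degree $n_\pi$, the largest $\pi$-number dividing $n$).
   Context: $G$ is $n$-isobicyclic with canonical generators $x,y$ if $X=\langle x\rangle$, $Y=\langle y\rangle$ are cyclic of order $n$, $G=XY$, $X\cap Y=1$, and some automorphism of $G$ transposes $x$ and $y$. For a set $\pi$ of primes, $X_\pi$ (resp. $Y_\pi$) is the Hall $\pi$-subgroup of the cyclic group $X$ (resp. $Y$), and $x=x_\pi x_{\pi'}$, $y=y_\pi y_{\pi'}$ are the unique factorisations with $x_\pi\in X_\pi$, $x_{\pi'}\in X_{\pi'}$, etc. A Hall $\pi$-subgroup is a subgroup whose order is a $\pi$-number and whose index is coprime to all primes in $\pi$. *)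

(* Defs.v *)
From mathcomp Require Import all_boot all_fingroup all_solvable.
Set Implicit Arguments. Unset Strict Implicit. Unset Printing Implicit Defensive.
Local Open Scope group_scope.

Definition isobicyclic (gT : finGroupType) (G : {set gT}) (x y : gT) (n : nat) : Prop :=
  [/\ #[x] = n, #[y] = n, <[x]> * <[y]> = G, <[x]> :&: <[y]> = 1
    & exists2 f : {perm gT}, f \in Aut G & f x = y /\ f y = x].

(* Main.v *)
Require Import Defs.
From mathcomp Require Import all_boot all_fingroup all_solvable.
Set Implicit Arguments. Unset Strict Implicit. Unset Printing Implicit Defensive.
Local Open Scope group_scope.

Lemma ito_conj (gT : finGroupType) (A B : {group gT}) :
  abelian A -> abelian B -> commute A B ->
  forall a a1 b b1, a \in A -> a1 \in A -> b \in B -> b1 \in B ->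
  [~ a, b] ^ (a1 * b1) = [~ a, b] ^ (b1 * a1).
Proof.
move=> cAA cBB AB a a1 b b1 Aa Aa1 Bb Bb1.
have JAB g h : g \in A <*> B -> h \in A <*> B -> g ^ h \in A * B.
  by move=> ? ?; rewrite -comm_joingE // groupJ.
have inA u : u \in A -> u \in A <*> B by move/(subsetP (joing_subl A B)).
have inB u : u \in B -> u \in A <*> B by move/(subsetP (joing_subr A B)).
have ca u v : u \in A -> v \in A -> [~ u, v] = 1.
  by move=> Au Av; apply/eqP/commgP; apply: (centsP cAA).
have cb u v : u \in B -> v \in B -> [~ u, v] = 1.
  by move=> Au Av; apply/eqP/commgP; apply: (centsP cBB).
have fa u v : u \in A -> v \in A -> u ^ v = u.
  by move=> Au Av; apply/conjg_fixP/eqP/ca.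
have fb u v : u \in B -> v \in B -> u ^ v = u.
  by move=> Au Av; apply/conjg_fixP/eqP/cb.
case/mulsgP: (JAB _ _ (inB _ Bb) (inA _ Aa1)) => a2 b2 Aa2 Bb2 e1.
have : a ^ b1 \in B * A.
  by have := JAB a b1 (inA _ Aa) (inB _ Bb1); rewrite /commute in AB; rewrite AB.
case/mulsgP=> b3 a3 Bb3 Aa3 e2.
have L1 : [~ a, b] ^ a1 = [~ a, b2].
  by rewrite conjRg (fa a a1) // e1 commgMJ (ca a a2) // conj1g mulg1.
have L2 : [~ a, b2] ^ b1 = [~ a3, b2].
  by rewrite conjRg (fb b2) // e2 commMgJ (cb b3) // conj1g mul1g.
have L3 : [~ a, b] ^ b1 = [~ a3, b].
  by rewrite conjRg (fb b) // e2 commMgJ (cb b3) // conj1g mul1g.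
have L4 : [~ a3, b] ^ a1 = [~ a3, b2].
  by rewrite conjRg (fa a3) // e1 commgMJ (ca a3 a2) // conj1g mulg1.
by rewrite !conjgM L1 L2 L3 L4.
Qed.

Lemma ito_sol (gT : finGroupType) (A B : {group gT}) :
  abelian A -> abelian B -> commute A B -> solvable (A <*> B).
Proof.
move=> cAA cBB AB.
have key a b a1 b1 : a \in A -> a1 \in A -> b \in B -> b1 \in B ->
    commute [~ a, b] [~ b1^-1, a1^-1].
  move=> Aa Aa1 Bb Bb1; apply/commgP/conjg_fixP.
  have -> : [~ b1^-1, a1^-1] = (b1 * a1) * (a1 * b1)^-1.
    by rewrite /commg /conjg !invgK invMg !mulgA.
  by rewrite conjgM -(ito_conj cAA cBB AB) // conjgK.
have cR : abelian [~: A, B].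
  rewrite abelian_gen; apply/centsP=> _ /imset2P[a b Aa Bb ->] _ /imset2P[a' b' Aa' Bb' ->].
  rewrite -(invg_comm b'); apply: commuteV.
  by have := key a b a'^-1 b'^-1; rewrite !invgK !groupV; apply.
have nRG := commg_normal A B.
rewrite (series_sol nRG) abelian_sol //= abelian_sol //.
have nR : A :|: B \subset 'N([~: A, B]).
  by rewrite (subset_trans _ (commg_norm A B)) // subset_gen.
change (abelian (<<A :|: B>> / [~: A, B])); rewrite quotient_gen // abelian_gen quotientU.
rewrite /abelian subUset centU !subsetI andbC centsC -andbA -!abelianE.
by rewrite !quotient_abelian //= andbb quotient_cents2r.
Qed.

Theorem proposition5p1 (gT : finGroupType) (G : {group gT}) (x y : gT)
    (n : nat) (pi : nat_pred) :
  isobicyclic G x y n -> {subset pi <= \pi(n)} ->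
  [/\ group_set (<[x.`_pi]> * <[y.`_pi]>),
      pi.-Hall(G) (<[x.`_pi]> * <[y.`_pi]>)
    & isobicyclic (<[x.`_pi]> * <[y.`_pi]>) x.`_pi y.`_pi n`_pi].
Proof.
case=> ox oy defG tiXY [f AutGf [fx fy]] _.
have cXY : commute <[x]> <[y]> by apply/comm_group_setP; rewrite defG groupP.
have defG' : <[y]> * <[x]> = G by rewrite -defG; symmetry; exact: cXY.
have sXG : <[x]> \subset G by rewrite -defG mulG_subl.
have sYG : <[y]> \subset G by rewrite -defG mulG_subr.
have Gx : x \in G by rewrite -cycle_subG.
have Gy : y \in G by rewrite -cycle_subG.
have solG : solvable G.
  by have := ito_sol (cycle_abelian x) (cycle_abelian y) cXY; rewrite comm_joingE // defG.
set xp := x.`_pi; set yp := y.`_pi.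
have sXpX : <[xp]> \subset <[x]> by rewrite cycle_subG cycle_constt.
have sYpY : <[yp]> \subset <[y]> by rewrite cycle_subG cycle_constt.
have sXpG := subset_trans sXpX sXG.
have sYpG := subset_trans sYpY sYG.
have piXp : pi.-group <[xp]> := p_elt_constt pi x.
have piYp : pi.-group <[yp]> := p_elt_constt pi y.
have [H hallH sXpH] := Hall_superset solG sXpG piXp.
have [g Gg sYpHg] := Hall_subJ solG hallH sYpG piYp.
have : g^-1 \in <[y]> * <[x]> by rewrite defG' groupV.
case/mulsgP=> b a Yb Xa eg.
have Ja : <[xp]> :^ a = <[xp]>.
  exact: (normP (subsetP (sub_abelian_norm (cycle_abelian x) sXpX) a Xa)).
have Jb : <[yp]> :^ b = <[yp]>.
  exact: (normP (subsetP (sub_abelian_norm (cycle_abelian y) sYpY) b Yb)).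
have sYpL : <[yp]> \subset H :^ a^-1.
  rewrite -sub_conjg; move: sYpHg; rewrite -[g]invgK -sub_conjg eg conjsgM Jb //.
have sXpL : <[xp]> \subset H :^ a^-1 by rewrite -sub_conjg Ja.
have Ga : a \in G := subsetP sXG a Xa.
have hallL : pi.-Hall(G) (H :^ a^-1)%G by rewrite pHallJ ?groupV.
have n_gt0 : 0 < n by rewrite -ox order_gt0.
have tiP : <[xp]> :&: <[yp]> = 1 by apply/trivgP; rewrite -tiXY setISS.
have cXp : #|<[xp]>| = (n`_pi)%N by rewrite -ox; exact: order_constt.
have cYp : #|<[yp]>| = (n`_pi)%N by rewrite -oy; exact: order_constt.
have EL : <[xp]> * <[yp]> = H :^ a^-1.
  apply/eqP; rewrite eqEcard mul_subG //= (card_Hall hallL) TI_cardMg //.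
  rewrite -defG TI_cardMg // cXp cYp.
  have -> : #|<[x]>| = n by [].
  by have -> : #|<[y]>| = n by []; rewrite partnM.
have gXYp : group_set (<[xp]> * <[yp]>) by rewrite EL groupP.
have cXYp : <[yp]> * <[xp]> = <[xp]> * <[yp]>.
  by symmetry; apply/comm_group_setP.
split=> //; first by rewrite EL.
split=> //.
have Gxp : xp \in G := subsetP sXpG xp (cycle_id xp).
have Gyp : yp \in G := subsetP sYpG yp (cycle_id yp).
have fxp : autm_morphism AutGf xp = yp.
  by rewrite morph_constt // (fx : autm_morphism AutGf x = y).
have fyp : autm_morphism AutGf yp = xp.
  by rewrite morph_constt // (fy : autm_morphism AutGf y = x).
have sLG : <[xp]> * <[yp]> \subset G by rewrite EL; exact: pHall_sub hallL.
have imL : autm AutGf @* (<[xp]> * <[yp]>) = <[xp]> * <[yp]>.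
  by rewrite morphimMl // !morphim_cycle // fxp fyp.
have nLf : f \in 'N(<[xp]> * <[yp]> | 'P).
  rewrite !inE; apply/subsetP=> u Lu; rewrite inE /=.
  have := mem_morphim (autm AutGf) (subsetP sLG u Lu) Lu.
  by rewrite imL.
exists (restr_perm (<[xp]> * <[yp]>) f).
  rewrite EL; exact: (@Aut_restr_perm gT G (H :^ a^-1)%G (pHall_sub hallL) f AutGf).
have Lxp : xp \in <[xp]> * <[yp]>.
  exact: (subsetP (mulG_subl _ _)) _ (cycle_id xp).
have Lyp : yp \in <[xp]> * <[yp]>.
  exact: (subsetP (mulG_subr _ _)) _ (cycle_id yp).
by rewrite !restr_permE.
Qed.
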